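(* Let $\mathbf P$ be a pentagon. For every constant $D\ge 1$ there is a linear reduction from $\mathsf{Lattice\text{-}Eval}(\mathbb L(\mathbf P),D)$ to $\mathsf{Pent\text{-}Eval}(\mathbf P)$.
   Context: For a set $X$, $\mathrm{Eq}(X)$ is the lattice of equivalence relations on $X$, with bottom $0_X=\{(a,a)\}$ and top $1_X=X^2$; $\theta\circ\theta'$ is relational product. A pentagon is a finite structure $\mathbf P$ with domain $P$ and three equivalence relations $\alpha^{\mathbf P},\beta^{\mathbf P},\gamma^{\mathbf P}$ on $P$ such that in $\mathrm{Eq}(P)$: $\alpha^{\mathbf P}\le\beta^{\mathbf P}$, $\beta^{\mathbf P}\wedge\gamma^{\mathbf P}=0_P$, $\beta^{\mathbf P}\circ\gamma^{\mathbf P}=1_P$, $\alpha^{\mathbf P}\vee\gamma^{\mathbf P}=1_P$. Then $P$ decomposes as $P=B_{\mathbf P}\times C_{\mathbf P}$ so that $\beta^{\mathbf P},\gamma^{\mathbf P}$ are the kernels of the projections onto $B_{\mathbf P}$ and $C_{\mathbf P}$ respectively. For $b\in B_{\mathbf P}$ let $\alpha^{\mathbf P}_b=\{(c,c')\in C_{\mathbf P}^2\mid((b,c),(b,c'))\in\alpha^{\mathbf P}\}$, and let $\mathbb L(\mathbf P)$ be the sublattice of $\mathrm{Eq}(C_{\mathbf P})$ generated by $\{\alpha^{\mathbf P}_b: b\in B_{\mathbf P}\}$. $\mathbf P_2$ is the 2-sorted structure with sorts $B_{\mathbf P}$ (first) and $C_{\mathbf P}$ (second) and one ternary relation $R=\{(b,c,c')\in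 B_{\mathbf P}\times C_{\mathbf P}\times C_{\mathbf P}\mid (c,c')\in\alpha^{\mathbf P}_b\}$; in atoms $R(x,y,y')$, $x$ is of first sort and $y,y'$ of second sort. $\mathsf{Pent\text{-}Eval}(\mathbf P)$: instances are a primitive-positive formula $\phi(X,Y)$ over $\{R\}$ (conjunction of atoms with some variables existentially quantified) with free variables $X$ of first sort and $Y$ of second sort ($X\cap Y=\emptyset$), and weights $w:X\cup Y\to[0,1]$ summing to 1; assignments map $X$ to $B_{\mathbf P}$ and $Y$ to $C_{\mathbf P}$ and are satisfying if $\phi$ is true in $\mathbf P_2$. For a finite lattice $\mathbb L$ and $D$, $\mathsf{Lattice\text{-}Eval}(\mathbb L,D)$: instances are a circuit $C$ on variables $V$ over $\{\wedge,\vee\}$ (fan-in 2) of depth $<D+D\log_2|V|$, an element $\ell\in L$, and weights $w$ on $V$ summing to 1; $f:V\to L$ is satisfying if $C(f)\ge\ell$. In both problems $\mathrm{dist}_{\mathcal I}(f)$ is the minimum weight of the set of free variables on which $f$ differs from some satisfying assignment. A linear reduction from $\mathcal P$ to $\mathcal P'$: given $(\mathcal I,f)$ with $\mathcal I$ on variable set $V$, it (possibly randomly) produces $(\mathcal I',f')$ with $|V'|=O(|V|)$ such that (i) $f$ satisfying implies $f'$ satisfying; (ii) for a constant $c_1>0$ and every $\epsilon\in(0,1)$, $\mathrm{dist}_{\mathcal I}(f)\ge\epsilon$ implies $\Pr[\mathrm{dist}_{\mathcal I'}(f')\ge c_1\epsilon]\ge9/10$; (iii) each value of $f'$ is computable with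 $O(1)$ queries to $f$. *)

(* Defs.v *)
From Stdlib Require Import Reals.
From mathcomp Require Import all_boot.
Set Implicit Arguments. Unset Strict Implicit. Unset Printing Implicit Defensive.

Definition is_equiv (P : finType) (e : rel P) : Prop :=
  (forall x, e x x) /\ (forall x y, e x y -> e y x) /\
  (forall x y z, e x y -> e y z -> e x z).

Definition rjoin (P : finType) (e1 e2 : rel P) : rel P :=
  connect (fun x y => e1 x y || e2 x y).

Definition is_pentagon (P : finType) (al be ga : rel P) : Prop :=
  [/\ is_equiv al, is_equiv be & is_equiv ga] /\
  [/\ (forall x y, al x y -> be x y),
      (forall x y, be x y -> ga x y -> x = y),
      (forall x z, exists y, be x y /\ ga y z)
    & (forall x y, rjoin al ga x y)].

Definition eqclasses (P : finType) (e : rel P) : {set {set P}} :=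
  (fun x => [set y | e x y]) @: [set: P].

Section PentagonDefs.
Variables (P : finType) (al be ga : rel P).

(* B_P = P / beta, C_P = P / gamma: P = B_P x C_P via the two projections *)
Definition Bt : finType := {A : {set P} | A \in eqclasses be}.
Definition Ct : finType := {A : {set P} | A \in eqclasses ga}.

Definition alpha_b (b : Bt) : rel Ct := fun c c' =>
  [exists p : P, exists p' : P,
     [&& p \in val b, p \in val c, p' \in val b, p' \in val c' & al p p']].

Definition relC := {set (Ct * Ct)}.
Definition alphaSet (b : Bt) : relC := [set q | alpha_b b q.1 q.2].
Definition meetC (x y : relC) : relC := x :&: y.
Definition joinC (x y : relC) : relC :=
  [set q | connect (fun a c => ((a, c) \in x) || ((a, c) \in y)) q.1 q.2].

Definition closedL (S : {set relC}) : bool :=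
  [forall b, alphaSet b \in S] &&
  [forall x in S, forall y in S, (meetC x y \in S) && (joinC x y \in S)].

Definition inL (x : relC) : bool := [forall S : {set relC}, closedL S ==> (x \in S)].

Definition LP : finType := {x : relC | inL x}.

Definition Rrel (b : Bt) (c c' : Ct) : bool := alpha_b b c c'.

Inductive circ (V : Type) : Type :=
| CVar : V -> circ V
| CAnd : circ V -> circ V -> circ V
| COr  : circ V -> circ V -> circ V.

Fixpoint cdepth (V : Type) (c : circ V) : nat :=
  match c with
  | CVar _ => 0
  | CAnd c1 c2 => (maxn (cdepth c1) (cdepth c2)).+1
  | COr c1 c2 => (maxn (cdepth c1) (cdepth c2)).+1
  end.

(* evaluation in Eq(C_P) (equivalently in L(P), a sublattice) *)
Fixpoint ceval (V : Type) (f : V -> LP) (c : circ V) : relC :=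
  match c with
  | CVar v => val (f v)
  | CAnd c1 c2 => meetC (ceval f c1) (ceval f c2)
  | COr c1 c2 => joinC (ceval f c1) (ceval f c2)
  end.

Record LInst := { LV : finType; Lc : circ LV; Lell : LP; Lw : LV -> R }.
Arguments Lw : clear implicits.

Definition valid_LInst (D : R) (I : LInst) : Prop :=
  [/\ (forall v, Rle R0 (Lw I v) /\ Rle (Lw I v) R1),
      \big[Rplus/R0]_(v : LV I) Lw I v = R1
    & Rlt (INR (cdepth (Lc I))) (Rplus D (Rmult D (Rdiv (ln (INR #|LV I|)) (ln (INR 2)))))].

Definition satL (I : LInst) (f : LV I -> LP) : Prop :=
  val (Lell I) \subset ceval f (Lc I).

Arguments satL : clear implicits.
Definition wdiffL (I : LInst) (f g : LV I -> LP) : R :=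
  \big[Rplus/R0]_(v : LV I | f v != g v) Lw I v.

Arguments wdiffL : clear implicits.

(* dist_I(f) >= eps  (min over satisfying assignments; min of empty = +oo) *)
Definition farL (I : LInst) (f : LV I -> LP) (eps : R) : Prop :=
  forall g, satL I g -> Rle eps (wdiffL I f g).

(* free first-sort vars PX, free second-sort vars PY, existentially
   quantified first-sort vars PEX and second-sort vars PEY; the pp-formula
   is the conjunction of the atoms R(x, y, y'). *)
Record PInst := {
  PX : finType; PY : finType; PEX : finType; PEY : finType;
  Patoms : seq ((PX + PEX) * (PY + PEY) * (PY + PEY));
  Pw : PX + PY -> R }.
Arguments Pw : clear implicits.
Arguments Patoms : clear implicits.

Definition valid_PInst (I : PInst) : Prop :=
  (forall v, Rle R0 (Pw I v) /\ Rle (Pw I v) R1) /\ \big[Rplus/R0]_(v : PX I + PY I) Pw I v = R1.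

Definition satP (I : PInst) (aX : PX I -> Bt) (aY : PY I -> Ct) : Prop :=
  exists (eX : PEX I -> Bt) (eY : PEY I -> Ct),
    let vx := fun u => match u with inl x => aX x | inr x => eX x end in
    let vy := fun u => match u with inl y => aY y | inr y => eY y end in
    all (fun t => Rrel (vx t.1.1) (vy t.1.2) (vy t.2)) (Patoms I).

Arguments satP : clear implicits.
Definition differP (I : PInst) (aX bX : PX I -> Bt) (aY bY : PY I -> Ct)
  (v : PX I + PY I) : bool :=
  match v with inl x => aX x != bX x | inr y => aY y != bY y end.

Definition wdiffP (I : PInst) (aX bX : PX I -> Bt) (aY bY : PY I -> Ct) : R :=
  \big[Rplus/R0]_(v : PX I + PY I | differP aX bX aY bY v) Pw I v.

Arguments wdiffP : clear implicits.

Definition farP (I : PInst) (aX : PX I -> Bt) (aY : PY I -> Ct) (eps : R) : Prop :=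
  forall bX bY, satP I bX bY -> Rle eps (wdiffP I aX bX aY bY).

Arguments farP : clear implicits.
Arguments farL : clear implicits.

(* A (randomized) reduction: random seed drawn uniformly from a finite
   nonempty set [seed I]; the new instance depends on I and the seed,
   the new assignment f' is computed from f. *)
Record Reduction := {
  seed : LInst -> finType;
  redI : forall I, seed I -> PInst;
  redX : forall I (s : seed I), (LV I -> LP) -> PX (redI s) -> Bt;
  redY : forall I (s : seed I), (LV I -> LP) -> PY (redI s) -> Ct }.
Arguments seed : clear implicits.
Arguments redI : clear implicits.
Arguments redX : clear implicits.
Arguments redY : clear implicits.

Definition linear_reduction (D : R) (F : Reduction) : Prop :=
  exists (cV c1 : R) (K : nat), Rlt R0 c1 /\
  forall I : LInst, valid_LInst D I ->
  [/\ (0 < #|seed F I|)%N,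
      (forall s, valid_PInst (redI F I s) /\
         Rle (INR (#|PX (redI F I s)| + #|PY (redI F I s)|)) (Rmult cV (INR #|LV I|))),
      (forall s f, satL I f -> satP (redI F I s) (redX F I s f) (redY F I s f)),
      (forall (eps : R) (f : LV I -> LP), Rlt R0 eps -> Rlt eps R1 -> farL I f eps ->
         exists G : {set seed F I},
           Rle (Rmult (Rdiv (INR 9) (INR 10)) (INR #|seed F I|)) (INR #|G|) /\
           forall s, s \in G -> farP (redI F I s) (redX F I s f) (redY F I s f) (Rmult c1 eps))
    &
      (forall s,
         (forall x, exists Q : {set LV I}, (#|Q| <= K)%N /\
            forall f g, {in Q, f =1 g} -> redX F I s f x = redX F I s g x) /\
         (forall y, exists Q : {set LV I}, (#|Q| <= K)%N /\
            forall f g, {in Q, f =1 g} -> redY F I s f y = redY F I s g y))].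

End PentagonDefs.

(* Main.v *)
From HB Require Import structures.
Require Import Defs.
From Stdlib Require Import Reals Lra.
From mathcomp Require Import all_boot.
Set Implicit Arguments. Unset Strict Implicit. Unset Printing Implicit Defensive.
Lemma RplusA : associative Rplus. Proof. by move=> x y z; rewrite Rplus_assoc. Qed.
HB.instance Definition _ := Monoid.isComLaw.Build R R0 Rplus RplusA Rplus_comm Rplus_0_l.

Lemma sumR_ge0 (I : Type) (r : seq I) (Pr : pred I) (F : I -> R) :
  (forall i, Pr i -> Rle 0 (F i)) -> Rle 0 (\big[Rplus/R0]_(i <- r | Pr i) F i).
Proof. move=> h; apply: (big_ind (fun x => Rle 0 x)) => //; [lra | move=> x y; lra]. Qed.

Lemma sumR_le (I : Type) (r : seq I) (Pr : pred I) (F G : I -> R) :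
  (forall i, Pr i -> Rle (F i) (G i)) ->
  Rle (\big[Rplus/R0]_(i <- r | Pr i) F i) (\big[Rplus/R0]_(i <- r | Pr i) G i).
Proof. move=> h; apply: (big_ind2 (fun x y => Rle x y)) => //; [lra | move=> x1 x2 y1 y2; lra]. Qed.

Lemma sumR_mulr (I : Type) (r : seq I) (Pr : pred I) (F : I -> R) (c : R) :
  \big[Rplus/R0]_(i <- r | Pr i) Rmult (F i) c = Rmult (\big[Rplus/R0]_(i <- r | Pr i) F i) c.
Proof.
apply: (big_ind2 (fun x y => x = Rmult y c)) => //; first by ring.
by move=> x1 x2 y1 y2 -> ->; ring.
Qed.

Lemma sumR_single (I : finType) (Pr : pred I) (F : I -> R) j :
  (forall i, Pr i -> Rle 0 (F i)) -> Pr j -> Rle (F j) (\big[Rplus/R0]_(i | Pr i) F i).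
Proof.
move=> h hj; rewrite (bigD1 j hj) /=.
have : Rle 0 (\big[Rplus/R0]_(i | Pr i && (i != j)) F i).
  by apply: sumR_ge0 => i /andP [hi _]; apply: h.
lra.
Qed.

Lemma sumR_const (I : finType) (c : R) : \big[Rplus/R0]_(i : I) c = Rmult (INR #|I|) c.
Proof.
rewrite big_const; elim: #|I| => [|n IH] /=; first ring.
rewrite IH; case: n {IH} => [|n] /=; ring.
Qed.

Lemma sum_empty (I : finType) (F : I -> R) : #|I| = 0 -> \big[Rplus/R0]_(i : I) F i = R0.
Proof. move=> h; rewrite big_pred0 // => i; have := card0_eq h i; by rewrite inE. Qed.
Section S.
Variables (P : finType) (al be ga : rel P).
Hypothesis Hp : is_pentagon al be ga.

Local Notation Bt := (Bt be).
Local Notation Ct := (Ct ga).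
Local Notation relC := (relC ga).
Local Notation LP := (LP al be ga).

Definition preordb (x : relC) : bool :=
  [forall a, (a, a) \in x] &&
  [forall a, forall b, forall c, ((a, b) \in x) ==> ((b, c) \in x) ==> ((a, c) \in x)].

Lemma preordP (x : relC) :
  reflect ((forall a, (a, a) \in x) /\
           (forall a b c, (a, b) \in x -> (b, c) \in x -> (a, c) \in x)) (preordb x).
Proof.
apply: (iffP andP) => [[/forallP H1 /forallP H2]|[H1 H2]]; split => //.
- move=> a b c; move/forallP: (H2 a) => /(_ b) /forallP /(_ c) /implyP H /H.
  by move/implyP.
- by apply/forallP.
- apply/forallP => a; apply/forallP => b; apply/forallP => c.
  by apply/implyP => ?; apply/implyP; apply: H2.
Qed.

Lemma cls_mem (e : rel P) (A : {set P}) : A \in eqclasses e ->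
  exists x, A = [set y | e x y].
Proof. by case/imsetP => x _ ->; exists x. Qed.

Lemma alpha_preord (b : Bt) : preordb (alphaSet al ga b).
Proof.
case: Hp => [[[alr [_ alt]] [ber [bes bet]] [gar [gas gat]]] [_ bg0 bg _]].
apply/preordP; split.
- move=> c; rewrite inE /alpha_b /=.
  case: (cls_mem (valP b)) => x hb; case: (cls_mem (valP c)) => z hc.
  case: (bg x z) => y [bxy gyz].
  apply/existsP; exists y; apply/existsP; exists y.
  by rewrite hb hc !inE bxy (gas _ _ gyz) alr.
- move=> c c' c''; rewrite !inE /alpha_b /=.
  case/existsP => p /existsP [p' /and5P [pb pc p'b p'c' app']].
  case/existsP => q /existsP [q' /and5P [qb qc' q'b q'c'' aqq']].
  apply/existsP; exists p; apply/existsP; exists q'.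
  rewrite pb pc q'b q'c'' /=.
  case: (cls_mem (valP b)) => x hb; case: (cls_mem (valP c')) => z hc.
  move: p'b qb p'c' qc'; rewrite hb hc !inE => h1 h2 h3 h4.
  have e : p' = q by apply: bg0; [apply: bet (bes _ _ h1) h2 | apply: gat (gas _ _ h3) h4].
  by subst; apply: alt app' aqq'.
Qed.

Lemma preord_closed : closedL al be [set x : relC | preordb x].
Proof.
apply/andP; split.
- by apply/forallP => b; rewrite inE alpha_preord.
- apply/forallP => x; apply/implyP; rewrite inE => /preordP [xr xt].
  apply/forallP => y; apply/implyP; rewrite inE => /preordP [yr yt].
  rewrite !inE; apply/andP; split; apply/preordP; split.
  + by move=> a; rewrite inE xr yr.
  + move=> a b c; rewrite !inE => /andP [h1 h2] /andP [h3 h4].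
    by rewrite (xt _ _ _ h1 h3) (yt _ _ _ h2 h4).
  + by move=> a; rewrite inE connect0.
  + by move=> a b c; rewrite !inE /=; apply: connect_trans.
Qed.

Lemma inL_preord (x : relC) : inL al be x -> preordb x.
Proof.
move/forallP => /(_ [set x : relC | preordb x]).
by rewrite preord_closed /= inE.
Qed.

Lemma inL_alpha (b : Bt) : inL al be (alphaSet al ga b).
Proof. by apply/forallP => S; apply/implyP => /andP [/forallP H _]. Qed.

Lemma inL_meet (x y : relC) : inL al be x -> inL al be y -> inL al be (meetC x y).
Proof.
move=> /forallP hx /forallP hy; apply/forallP => S; apply/implyP => hS.
move: (hx S) (hy S); rewrite hS /= => xS yS.
by case/andP: hS => _ /forallP /(_ x); rewrite xS /= => /forallP /(_ y); rewrite yS => /andP [].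
Qed.

Lemma inL_join (x y : relC) : inL al be x -> inL al be y -> inL al be (joinC x y).
Proof.
move=> /forallP hx /forallP hy; apply/forallP => S; apply/implyP => hS.
move: (hx S) (hy S); rewrite hS /= => xS yS.
by case/andP: hS => _ /forallP /(_ x); rewrite xS /= => /forallP /(_ y); rewrite yS => /andP [].
Qed.

Lemma inL_ceval (V : Type) (f : V -> LP) (t : circ V) : inL al be (ceval f t).
Proof.
elim: t => [v|t1 IH1 t2 IH2|t1 IH1 t2 IH2] /=.
- exact: valP.
- exact: inL_meet.
- exact: inL_join.
Qed.

Definition alphaLP (b : Bt) : LP := Sub (alphaSet al ga b) (inL_alpha b).
Definition leafval (W : Type) (x : W -> Bt) : W -> LP := fun w => alphaLP (x w).

Lemma eq_ceval (V : Type) (f g : V -> LP) (t : circ V) : f =1 g -> ceval f t = ceval g t.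
Proof. by move=> e; elim: t => [v|t1 IH1 t2 IH2|t1 IH1 t2 IH2] /=; rewrite ?e ?IH1 ?IH2. Qed.

Fixpoint cmap (V W : Type) (g : V -> W) (t : circ V) : circ W :=
  match t with
  | CVar v => CVar (g v)
  | CAnd t1 t2 => CAnd (cmap g t1) (cmap g t2)
  | COr t1 t2 => COr (cmap g t1) (cmap g t2)
  end.

Lemma ceval_cmap (V W : Type) (g : V -> W) (f : W -> LP) t :
  ceval f (cmap g t) = ceval (fun v => f (g v)) t.
Proof. by elim: t => [v|t1 IH1 t2 IH2|t1 IH1 t2 IH2] /=; rewrite ?IH1 ?IH2. Qed.

Fixpoint csubst (V W : Type) (h : V -> circ W) (t : circ V) : circ W :=
  match t with
  | CVar v => h v
  | CAnd t1 t2 => CAnd (csubst h t1) (csubst h t2)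
  | COr t1 t2 => COr (csubst h t1) (csubst h t2)
  end.

Lemma ceval_csubst (V W : Type) (h : V -> circ W) (f : W -> LP) t :
  ceval f (csubst h t) = ceval (fun v => (Sub (ceval f (h v)) (inL_ceval f (h v)) : LP)) t.
Proof. by elim: t => [v|t1 IH1 t2 IH2|t1 IH1 t2 IH2] /=; rewrite ?IH1 ?IH2. Qed.


Definition relcomp (x y : relC) : relC :=
  [set q | [exists c, ((q.1, c) \in x) && ((c, q.2) \in y)]].

Fixpoint rpow (x : relC) (k : nat) : relC :=
  if k is k'.+1 then relcomp x (rpow x k') else x.

Lemma path_rpow (x : relC) : (forall a, (a, a) \in x) ->
  forall p a, path (fun u v => (u, v) \in x) a p ->
  forall k, (size p <= k.+1)%N -> (a, last a p) \in rpow x k.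
Proof.
move=> xr; elim => [|a1 p IH] a /=.
- move=> _; elim => [|k IHk] _ //=.
  by rewrite inE; apply/existsP; exists a; rewrite xr IHk.
- case/andP => h1 h2 [|k] hs /=.
  + by case: p hs {IH h2} => //.
  + by rewrite inE; apply/existsP; exists a1; rewrite h1 /= IH.
Qed.

Lemma rpow_connect (x : relC) (e : rel Ct) : (forall a b, (a, b) \in x -> connect e a b) ->
  forall k a b, (a, b) \in rpow x k -> connect e a b.
Proof.
move=> h; elim => [|k IH] a b /=; first exact: h.
rewrite inE => /existsP [c /andP [h1 h2]].
exact: connect_trans (h _ _ h1) (IH _ _ h2).
Qed.

Lemma joinC_pow (x y : relC) : (forall a, (a, a) \in x) -> (forall a, (a, a) \in y) ->
  joinC x y = rpow (relcomp x y) #|Ct|.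
Proof.
move=> xr yr; apply/setP => -[a b]; rewrite inE /=.
apply/idP/idP.
- case/connectP => p hp ->.
  case: (shortenP hp) => p' hp' hu _.
  apply: path_rpow.
  + by move=> c; rewrite inE; apply/existsP; exists c; rewrite xr yr.
  + apply: sub_path hp' => u v /orP [] h; rewrite inE; apply/existsP.
    * by exists v; rewrite h yr.
    * by exists u; rewrite h xr.
  + have hc : (size (a :: p') <= #|Ct|)%N by rewrite -(card_uniqP hu) max_card.
    by apply: leq_trans (leqnSn _); apply: leq_trans hc; rewrite /= leqnSn.
- apply: rpow_connect => u v; rewrite inE => /existsP [c /andP [h1 h2]].
  by apply: (connect_trans (y := c)); apply: connect1; rewrite /= ?h1 ?h2 ?orbT.
Qed.

Lemma joinC_idem (z : relC) : preordb z -> joinC z z = z.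
Proof.
case/preordP => zr zt; apply/setP => -[a b]; rewrite inE /=; apply/idP/idP.
- case/connectP => p hp ->; elim: p a hp => [|c p IH] a /=; first by rewrite zr.
  case/andP => /orP h1 h2.
  have h1' : (a, c) \in z by case: h1.
  exact: zt h1' (IH _ h2).
- by move=> h; apply: connect1; rewrite h.
Qed.


Definition o0 : 'I_4 := @Ordinal 4 0 isT.
Definition o1 : 'I_4 := @Ordinal 4 1 isT.
Definition o2 : 'I_4 := @Ordinal 4 2 isT.
Definition o3 : 'I_4 := @Ordinal 4 3 isT.

Fixpoint Ut (d : nat) : circ (d.-tuple 'I_4) :=
  match d return circ (d.-tuple 'I_4) with
  | 0 => CVar [tuple]
  | d'.+1 => COr (CAnd (cmap (cons_tuple o0) (Ut d')) (cmap (cons_tuple o1) (Ut d')))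
                 (CAnd (cmap (cons_tuple o2) (Ut d')) (cmap (cons_tuple o3) (Ut d')))
  end.

Definition evU (d : nat) (x : d.-tuple 'I_4 -> Bt) : relC := ceval (leafval x) (Ut d).

Definition Sset (d : nat) : {set relC} :=
  [set evU (fun t => x t) | x : {ffun d.-tuple 'I_4 -> Bt}].

Lemma evU_step d (x1 x2 x3 x4 : {ffun d.-tuple 'I_4 -> Bt}) :
  joinC (meetC (evU x1) (evU x2)) (meetC (evU x3) (evU x4)) \in Sset d.+1.
Proof.
pose x := [ffun t : d.+1.-tuple 'I_4 =>
   let i := thead t in let t' : d.-tuple 'I_4 := behead_tuple t in
   if i == o0 then x1 t' else if i == o1 then x2 t' else if i == o2 then x3 t' else x4 t'].
apply/imsetP; exists x => //.
rewrite /evU /= !ceval_cmap.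
have e : forall (i : 'I_4) (y : {ffun d.-tuple 'I_4 -> Bt}),
    (forall t, x (cons_tuple i t) = y t) ->
    ceval (fun v => leafval (fun t => x t) (cons_tuple i v)) (Ut d) = ceval (leafval y) (Ut d).
  by move=> i y hy; apply: eq_ceval => v; rewrite /leafval hy.
have bh : forall (i : 'I_4) (t : d.-tuple 'I_4), behead_tuple (cons_tuple i t) = t.
  by move=> i t; apply: val_inj.
rewrite (e o0 x1); last by move=> t; rewrite ffunE theadE bh.
rewrite (e o1 x2); last by move=> t; rewrite ffunE theadE bh.
rewrite (e o2 x3); last by move=> t; rewrite ffunE theadE bh.
rewrite (e o3 x4); last by move=> t; rewrite ffunE theadE bh.
by [].
Qed.

Lemma Sset_inL d z : z \in Sset d -> inL al be z.
Proof. by case/imsetP => x _ ->; apply: inL_ceval. Qed.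

Lemma Sset_mono d : Sset d \subset Sset d.+1.
Proof.
apply/subsetP => z hz; case/imsetP: (hz) => x _ ez.
have p := inL_preord (Sset_inL hz).
have := evU_step x x x x; rewrite -ez /meetC setIid joinC_idem //.
Qed.

Lemma Sset_meet d z1 z2 : z1 \in Sset d -> z2 \in Sset d -> meetC z1 z2 \in Sset d.+1.
Proof.
move=> h1 h2; case/imsetP: (h1) => x1 _ e1; case/imsetP: (h2) => x2 _ e2.
have p := inL_preord (inL_meet (Sset_inL h1) (Sset_inL h2)).
by have := evU_step x1 x2 x1 x2; rewrite -e1 -e2 joinC_idem.
Qed.

Lemma Sset_join d z1 z2 : z1 \in Sset d -> z2 \in Sset d -> joinC z1 z2 \in Sset d.+1.
Proof.
move=> h1 h2; case/imsetP: (h1) => x1 _ e1; case/imsetP: (h2) => x2 _ e2.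
by have := evU_step x1 x1 x2 x2; rewrite -e1 -e2 /meetC !setIid.
Qed.

Lemma Sset_mono_add d k : Sset d \subset Sset (k + d).
Proof.
elim: k => [|k IH] /=; first exact: subxx.
exact: subset_trans IH (Sset_mono _).
Qed.

Lemma Sset_alpha d (b : Bt) : alphaSet al ga b \in Sset d.
Proof.
have h0 : alphaSet al ga b \in Sset 0.
  apply/imsetP; exists [ffun=> b] => //.
  by rewrite /evU /= /leafval ffunE.
by have := subsetP (Sset_mono_add 0 d); rewrite addn0; apply.
Qed.

Lemma Sset_stab : exists d, Sset d.+1 \subset Sset d.
Proof.
case: (boolP [exists d : 'I_(#|relC|.+2), Sset d.+1 \subset Sset d]).
  by case/existsP => d h; exists d.
rewrite negb_exists => /forallP H.
have key : forall k, (k < #|relC|.+2)%N -> (k <= #|Sset k|)%N.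
  elim => [|k IH] hk //.
  have hk' : (k < #|relC|.+2)%N by apply: ltnW.
  have := H (Ordinal hk') => /= hn.
  have : Sset k \proper Sset k.+1 by rewrite properE Sset_mono hn.
  move/proper_card; apply: leq_trans; rewrite ltnS; exact: IH.
have := key #|relC|.+1 (leqnn _).
by rewrite leqNgt ltnS max_card.
Qed.

Lemma code_exists : exists d, forall th : LP,
  exists x : {ffun d.-tuple 'I_4 -> Bt}, evU (fun t => x t) = val th.
Proof.
case: Sset_stab => d hd.
have cl : closedL al be (Sset d).
  apply/andP; split; first by apply/forallP => b; apply: Sset_alpha.
  apply/forallP => z1; apply/implyP => h1; apply/forallP => z2; apply/implyP => h2.
  by rewrite (subsetP hd _ (Sset_meet h1 h2)) (subsetP hd _ (Sset_join h1 h2)).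
exists d => th.
have := valP th => /forallP /(_ (Sset d)); rewrite cl /= => /imsetP [x _ e].
by exists x.
Qed.


Section PP.
Variables (W : Type) (Y : eqType) (aX : W -> Bt) (aY : Y -> Ct).

Definition atom := (W * (Y + nat) * (Y + nat))%type.
Definition vy (nu : nat -> Ct) (u : Y + nat) : Ct :=
  match u with inl y => aY y | inr k => nu k end.
Definition asat (nu : nat -> Ct) (t : atom) : bool :=
  Rrel al (aX t.1.1) (vy nu t.1.2) (vy nu t.2).
Definition gen := (Y + nat) -> (Y + nat) -> nat -> (seq atom * nat).
Definition below (n : nat) (u : Y + nat) : bool :=
  match u with inl _ => true | inr k => (k < n)%N end.

Definition agree (n : nat) (nu nu' : nat -> Ct) := forall k, (k < n)%N -> nu k = nu' k.

Definition local (n : nat) (s : seq atom) :=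
  forall nu nu', agree n nu nu' -> all (asat nu) s = all (asat nu') s.

Definition spec (G : gen) (rho : relC) :=
  forall a b n, below n a -> below n b ->
  [/\ (n <= (G a b n).2)%N,
      local (G a b n).2 (G a b n).1,
      (forall nu, all (asat nu) (G a b n).1 -> (vy nu a, vy nu b) \in rho)
    & (forall nu, (vy nu a, vy nu b) \in rho ->
         exists nu', agree n nu' nu /\ all (asat nu') (G a b n).1)].

Lemma vy_agree n nu nu' u : below n u -> agree n nu nu' -> vy nu u = vy nu' u.
Proof. by case: u => //= k hk h; apply: h. Qed.

Lemma below_le n m u : (n <= m)%N -> below n u -> below m u.
Proof. by case: u => //= k hnm hk; apply: leq_trans hk hnm. Qed.

Lemma agree_le n m nu nu' : (n <= m)%N -> agree m nu nu' -> agree n nu nu'.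
Proof. by move=> hnm h k hk; apply: h; apply: leq_trans hk hnm. Qed.

Lemma agree_sym n nu nu' : agree n nu nu' -> agree n nu' nu.
Proof. by move=> h k hk; rewrite h. Qed.

Lemma agree_trans n nu1 nu2 nu3 : agree n nu1 nu2 -> agree n nu2 nu3 -> agree n nu1 nu3.
Proof. by move=> h1 h2 k hk; rewrite h1 ?h2. Qed.

Definition gvar (w : W) : gen := fun a b n => ([:: (w, a, b)], n).

Lemma gvar_spec w : spec (gvar w) (alphaSet al ga (aX w)).
Proof.
move=> a b n ha hb; split => //=.
- move=> nu nu' h; rewrite /asat /= (vy_agree ha h) (vy_agree hb h) //.
- by move=> nu; rewrite andbT inE.
- by move=> nu h; exists nu; split => //; rewrite /= andbT; move: h; rewrite inE.
Qed.

Definition gand (G1 G2 : gen) : gen := fun a b n =>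
  let r1 := G1 a b n in let r2 := G2 a b r1.2 in (r1.1 ++ r2.1, r2.2).

Lemma gand_spec G1 G2 r1 r2 : spec G1 r1 -> spec G2 r2 -> spec (gand G1 G2) (meetC r1 r2).
Proof.
move=> s1 s2 a b n ha hb; rewrite /gand /=.
case: (s1 a b n ha hb) => le1 lo1 so1 co1.
have ha' := below_le le1 ha; have hb' := below_le le1 hb.
case: (s2 a b _ ha' hb') => le2 lo2 so2 co2.
split.
- exact: leq_trans le1 le2.
- move=> nu nu' h; rewrite !all_cat (lo1 nu nu') ?(lo2 nu nu') //.
  exact: agree_le h.
- by move=> nu; rewrite all_cat => /andP [h1 h2]; rewrite inE so1 // so2.
- move=> nu; rewrite inE => /andP [h1 h2].
  case: (co1 nu h1) => nu1 [ag1 sat1].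
  have h2' : (vy nu1 a, vy nu1 b) \in r2 by rewrite (vy_agree ha ag1) (vy_agree hb ag1).
  case: (co2 nu1 h2') => nu2 [ag2 sat2].
  exists nu2; split; first exact: agree_trans (agree_le le1 ag2) ag1.
  by rewrite all_cat sat2 andbT (lo1 nu2 nu1) //.
Qed.

Definition gcomp (G1 G2 : gen) : gen := fun a b n =>
  let r1 := G1 a (inr n) n.+1 in let r2 := G2 (inr n) b r1.2 in (r1.1 ++ r2.1, r2.2).

Lemma gcomp_spec G1 G2 r1 r2 : spec G1 r1 -> spec G2 r2 -> spec (gcomp G1 G2) (relcomp r1 r2).
Proof.
move=> s1 s2 a b n ha hb; rewrite /gcomp /=.
have hz : below n.+1 (inr n) by rewrite /= ltnSn.
case: (s1 a (inr n) n.+1 (below_le (leqnSn n) ha) hz) => le1 lo1 so1 co1.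
have hz' := below_le le1 hz; have hb' := below_le (leq_trans (leqnSn n) le1) hb.
case: (s2 _ b _ hz' hb') => le2 lo2 so2 co2.
split.
- exact: leq_trans (leqnSn n) (leq_trans le1 le2).
- move=> nu nu' h; rewrite !all_cat (lo1 nu nu') ?(lo2 nu nu') //.
  exact: agree_le h.
- move=> nu; rewrite all_cat => /andP [h1 h2]; rewrite inE; apply/existsP.
  by exists (nu n); rewrite (so1 _ h1) (so2 _ h2).
- move=> nu; rewrite inE => /existsP [c /andP [h1 h2]].
  pose nu0 := fun k => if k == n then c else nu k.
  have ag0 : agree n nu0 nu by move=> k hk; rewrite /nu0 (ltn_eqF hk).
  have h1' : (vy nu0 a, vy nu0 (inr n)) \in r1 by rewrite (vy_agree ha ag0) /= /nu0 eqxx.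
  case: (co1 nu0 h1') => nu1 [ag1 sat1].
  have h2' : (vy nu1 (inr n), vy nu1 b) \in r2.
    rewrite (vy_agree hz ag1) (vy_agree (below_le (leqnSn n) hb) ag1) /= /nu0 eqxx.
    by rewrite (vy_agree hb ag0).
  case: (co2 nu1 h2') => nu2 [ag2 sat2].
  exists nu2; split.
  + apply: agree_trans (agree_le (leq_trans (leqnSn n) le1) ag2) _.
    exact: agree_trans (agree_le (leqnSn n) ag1) ag0.
  + by rewrite all_cat sat2 andbT (lo1 nu2 nu1) //.
Qed.

Fixpoint gpow (G : gen) (k : nat) : gen :=
  if k is k'.+1 then gcomp G (gpow G k') else G.

Lemma gpow_spec G r k : spec G r -> spec (gpow G k) (rpow r k).
Proof. by move=> s; elim: k => [|k IH] //=; apply: gcomp_spec. Qed.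

Fixpoint gcirc (t : circ W) : gen :=
  match t with
  | CVar w => gvar w
  | CAnd t1 t2 => gand (gcirc t1) (gcirc t2)
  | COr t1 t2 => gpow (gcomp (gcirc t1) (gcirc t2)) #|Ct|
  end.

Lemma gcirc_spec t : spec (gcirc t) (ceval (leafval aX) t).
Proof.
elim: t => [w|t1 IH1 t2 IH2|t1 IH1 t2 IH2] /=.
- exact: gvar_spec.
- exact: gand_spec.
- case/preordP: (inL_preord (inL_ceval (leafval aX) t1)) => r1 _.
  case/preordP: (inL_preord (inL_ceval (leafval aX) t2)) => r2 _.
  rewrite joinC_pow //; apply: gpow_spec; exact: gcomp_spec.
Qed.

Fixpoint gall (G : gen) (ps : seq (Y * Y)) (n : nat) : seq atom * nat :=
  match ps with
  | [::] => ([::], n)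
  | p :: ps' => let r1 := G (inl p.1) (inl p.2) n in
                let r2 := gall G ps' r1.2 in (r1.1 ++ r2.1, r2.2)
  end.

Lemma gall_spec G rho : spec G rho -> forall ps n,
  [/\ (n <= (gall G ps n).2)%N,
      local (gall G ps n).2 (gall G ps n).1,
      (forall nu, all (asat nu) (gall G ps n).1 -> forall p, p \in ps -> (aY p.1, aY p.2) \in rho)
    & ((forall p, p \in ps -> (aY p.1, aY p.2) \in rho) ->
         forall nu, exists nu', agree n nu' nu /\ all (asat nu') (gall G ps n).1)].
Proof.
move=> sG; elim => [|p ps IH] n /=.
- split => //; last by move=> _ nu; exists nu.
- case: (sG (inl p.1) (inl p.2) n isT isT) => le1 lo1 so1 co1.
  case: (IH (G (inl p.1) (inl p.2) n).2) => le2 lo2 so2 co2.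
  split.
  + exact: leq_trans le1 le2.
  + move=> nu nu' h; rewrite !all_cat (lo1 nu nu') ?(lo2 nu nu') //.
    exact: agree_le h.
  + move=> nu; rewrite all_cat => /andP [h1 h2] q; rewrite inE => /orP [/eqP ->|hq].
    * exact: (so1 _ h1).
    * exact: (so2 _ h2).
  + move=> H nu.
    have hp : (vy nu (inl p.1), vy nu (inl p.2)) \in rho by apply: H; rewrite mem_head.
    case: (co1 nu hp) => nu1 [ag1 sat1].
    have H' : forall q, q \in ps -> (aY q.1, aY q.2) \in rho.
      by move=> q hq; apply: H; rewrite in_cons hq orbT.
    case: (co2 H' nu1) => nu2 [ag2 sat2].
    exists nu2; split; first exact: agree_trans (agree_le le1 ag2) ag1.
    by rewrite all_cat sat2 andbT (lo1 nu2 nu1).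
Qed.

End PP.

End S.
Section Main.
Variables (P : finType) (al be ga : rel P).
Hypothesis Hp : is_pentagon al be ga.
Variable d : nat.
Local Notation Bt := (Bt be).
Local Notation Ct := (Ct ga).
Local Notation LP := (LP al be ga).
Local Notation Tup := (d.-tuple 'I_4).
Variable code : LP -> {ffun Tup -> Bt}.
Hypothesis Hcode : forall th, evU al ga (fun t => code th t) = val th.

Definition Wt (I : LInst al be ga) : finType := (LV I * Tup)%type.
Definition TI (I : LInst al be ga) : circ (Wt I) :=
  csubst (fun v => cmap (fun l => (v, l)) (Ut d)) (Lc I).
Definition res (I : LInst al be ga) := gall (gcirc ga (TI I)) (enum (val (Lell I))) 0.
Definition Mx I := (res I).2.
Definition conv I (u : Ct + nat) : Ct + 'I_(Mx I).+1 :=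
  match u with inl c => inl c | inr k => inr (inord k) end.
Definition patoms I : seq ((Wt I + void) * (Ct + 'I_(Mx I).+1) * (Ct + 'I_(Mx I).+1)) :=
  map (fun t : atom (Wt I) Ct => (inl t.1.1, conv I t.1.2, conv I t.2)) (res I).1.
Definition NN := #|{: Tup}|.
Definition wt I (v : Wt I + Ct) : R :=
  match v with inl w => Rdiv (Lw w.1) (2 * INR NN) | inr _ => Rinv (2 * INR #|Ct|) end.
Definition PI I : PInst := Build_PInst (patoms I) (@wt I).

Lemma sat_iff I (bX : Wt I -> Bt) (bY : Ct -> Ct) :
  satP al (I:=PI I) bX bY <-> exists nu, all (asat al bX bY nu) (res I).1.
Proof.
have e : forall eY : 'I_(Mx I).+1 -> Ct,
  all (fun t : (Wt I + void) * (Ct + 'I_(Mx I).+1) * (Ct + 'I_(Mx I).+1) =>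
     Rrel al (match t.1.1 with inl x => bX x | inr x => match x with end end)
       (match t.1.2 with inl y => bY y | inr y => eY y end)
       (match t.2 with inl y => bY y | inr y => eY y end)) (patoms I)
  = all (asat al bX bY (fun k => eY (inord k))) (res I).1.
  move=> eY; rewrite /patoms all_map; apply: eq_all => -[[w a] b] /=.
  by rewrite /asat /=; case: a; case: b.
split.
- case=> eX [eY h]; exists (fun k => eY (inord k)); rewrite -e.
  move: h; apply: eq_ind; apply: eq_all => -[[[w|[]] a] b] //.
- case=> nu h; exists (fun x : void => match x with end); exists (fun i : 'I_(Mx I).+1 => nu i).
  have := e (fun i : 'I_(Mx I).+1 => nu i); rewrite /= => ->.
  case: (gall_spec (gcirc_spec Hp bX bY (TI I)) (enum (val (Lell I))) 0) => _ lo _ _.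
  rewrite -(lo nu) //; move=> k hk; rewrite inordK //; apply: leq_trans hk _; exact: leqnSn.
Qed.


Local Notation lv := (leafval al ga).

Lemma LP_Ct (th : LP) : (0 < #|Ct|)%N.
Proof.
case: (boolP [exists b : Bt, true]) => [/existsP [b _]|hn].
- case: (cls_mem (valP b)) => x _; apply/card_gt0P.
  have hx : [set y | ga x y] \in eqclasses ga by apply/imsetP; exists x.
  by exists (exist (fun A : {set P} => A \in eqclasses ga) _ hx : Ct).
- exfalso; have := valP th => /forallP /(_ set0).
  have -> : closedL al be (set0 : {set relC ga}).
    apply/andP; split.
    + apply/forallP => b; move: hn; rewrite negb_exists => /forallP /(_ b) //.
    + by apply/forallP => x; rewrite inE.
  by rewrite inE.
Qed.

Definition gdec I (aX : Wt I -> Bt) (v : LV I) : LP :=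
  Sub (ceval (lv aX) (cmap (fun l => (v, l)) (Ut d))) (inL_ceval _ _).

Lemma TI_eval I (aX : Wt I -> Bt) : ceval (lv aX) (TI I) = ceval (gdec aX) (Lc I).
Proof. by rewrite /TI ceval_csubst. Qed.

Lemma complete I (f : LV I -> LP) : satL f ->
  satP al (I:=PI I) (fun w => code (f w.1) w.2) (fun c => c).
Proof.
move=> hf; apply/sat_iff.
case: (gall_spec (gcirc_spec Hp (fun w : Wt I => code (f w.1) w.2) (fun c => c) (TI I))
          (enum (val (Lell I))) 0) => _ _ _ co.
case/card_gt0P: (LP_Ct (Lell I)) => c0 _.
have [|nu [_ h]] := co _ (fun _ => c0); last by exists nu.
move=> [c c'] hp /=.
rewrite TI_eval (@eq_ceval _ _ _ _ _ _ f); last first.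
  move=> v; apply: val_inj; rewrite /= ceval_cmap -Hcode; apply: eq_ceval => l //.
by have := subsetP hf (c, c'); rewrite -mem_enum; apply.
Qed.


Lemma diff_leaf I (f : LV I -> LP) (bX : Wt I -> Bt) v :
  f v != gdec bX v -> exists l, code (f v) l != bX (v, l).
Proof.
move=> hv; case: (boolP [exists l, code (f v) l != bX (v, l)]) => [/existsP //|hn].
exfalso; move/negP: hv; apply; apply/eqP; apply: val_inj.
rewrite /= ceval_cmap -Hcode; apply: eq_ceval => l.
rewrite /leafval; congr alphaLP; apply/eqP; apply/negPn; apply/negP => h.
by move/negP: hn; apply; apply/existsP; exists l.
Qed.

Lemma sound_B I (f : LV I -> LP) eps (bX : Wt I -> Bt) (bY : Ct -> Ct) :
  (forall v : LV I, Rle 0 (Lw v)) -> (forall c, bY c = c) -> farL f eps ->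
  satP al (I:=PI I) bX bY ->
  Rle (Rdiv eps (2 * INR NN)) (wdiffP (I:=PI I) (fun w => code (f w.1) w.2) bX (fun c => c) bY).
Proof.
move=> w0 hY far /sat_iff [nu hs].
case: (gall_spec (gcirc_spec Hp bX bY (TI I)) (enum (val (Lell I))) 0) => _ _ so _.
have sg : satL (gdec bX).
  apply/subsetP => -[c c'] hp; rewrite -TI_eval.
  by have := so nu hs (c, c'); rewrite mem_enum /= !hY; apply.
have hle := far _ sg.
have hN : Rlt 0 (INR NN).
  apply: lt_0_INR; apply/ltP; apply/card_gt0P; exists [tuple of nseq d (@Ordinal 4 0 isT)] => //.
have hC := LP_Ct (Lell I).
have hCr : Rlt 0 (INR #|Ct|) by apply: lt_0_INR; apply/ltP.
rewrite /wdiffP big_sumType /=.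
have h2 : Rle 0 (\big[Rplus/R0]_(i | i != bY i) Rinv (2 * INR #|Ct|)).
  apply: sumR_ge0 => c _; apply: Rlt_le; apply: Rinv_0_lt_compat; lra.
suff h1 : Rle (Rdiv eps (2 * INR NN))
   (\big[Rplus/R0]_(i | code (f i.1) i.2 != bX i) (Rdiv (Lw i.1) (2 * INR NN))).
  { move: h1 h2. set A := \big[Rplus/R0]_(i | _) _. set B := \big[Rplus/R0]_(i | _) _. move=> h1 h2; lra.
  }
have hNi : Rle 0 (Rinv (2 * INR NN)) by apply: Rlt_le; apply: Rinv_0_lt_compat; lra.
rewrite big_mkcond.
have -> : \big[Rplus/R0]_(i : Wt I)
    (if code (f i.1) i.2 != bX i then Rdiv (Lw i.1) (2 * INR NN) else R0) =
  \big[Rplus/R0]_(v : LV I) \big[Rplus/R0]_(l : Tup)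
    (if code (f v) l != bX (v, l) then Rdiv (Lw v) (2 * INR NN) else R0).
  by rewrite pair_bigA; apply: eq_bigr => -[v l].
have step : forall v : LV I,
   Rle (if f v != gdec bX v then Rdiv (Lw v) (2 * INR NN) else R0)
       (\big[Rplus/R0]_(l : Tup) (if code (f v) l != bX (v, l) then Rdiv (Lw v) (2 * INR NN) else R0)).
  move=> v.
  have nn : forall l : Tup, true ->
      Rle 0 (if code (f v) l != bX (v, l) then Rdiv (Lw v) (2 * INR NN) else R0).
    move=> l _; case: ifP => _; last by apply: Rle_refl.
    by apply: Rmult_le_pos.
  case: ifP => hv.
  - case: (diff_leaf hv) => l hl.
    by have := sumR_single nn (isT : xpredT l); move/(_ l); rewrite hl; apply.
  - exact: sumR_ge0.
apply: Rle_trans (@sumR_le (LV I) (index_enum _) xpredT _ _ (fun v _ => step v)).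
have -> : \big[Rplus/R0]_(v <- index_enum (LV I) | xpredT v)
    (if f v != gdec bX v then Rdiv (Lw v) (2 * INR NN) else R0) =
    Rmult (wdiffL f (gdec bX)) (Rinv (2 * INR NN)).
  rewrite /wdiffL -sumR_mulr [RHS]big_mkcond /=; apply: eq_bigr => v _.
  by case: ifP => _; rewrite /Rdiv //; ring.
by apply: Rmult_le_compat_r.
Qed.


Lemma NN_pos : Rlt 0 (INR NN).
Proof.
apply: lt_0_INR; apply/ltP; apply/card_gt0P; exists [tuple of nseq d (@Ordinal 4 0 isT)] => //.
Qed.

Lemma sound_A I (f : LV I -> LP) (bX : Wt I -> Bt) (bY : Ct -> Ct) c :
  (forall v : LV I, Rle 0 (Lw v)) -> bY c != c ->
  Rle (Rinv (2 * INR #|Ct|)) (wdiffP (I:=PI I) (fun w => code (f w.1) w.2) bX (fun c => c) bY).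
Proof.
move=> w0 hc; have hN := NN_pos.
have hC := LP_Ct (Lell I).
have hCr : Rlt 0 (INR #|Ct|) by apply: lt_0_INR; apply/ltP.
rewrite /wdiffP.
have := @sumR_single _ (differP (I:=PI I) (fun w => code (f w.1) w.2) bX (fun c => c) bY)
   (@wt I) (inr c).
apply.
- move=> [w|c'] _ /=.
  + apply: Rmult_le_pos => //; apply: Rlt_le; apply: Rinv_0_lt_compat; lra.
  + apply: Rlt_le; apply: Rinv_0_lt_compat; apply: Rmult_lt_0_compat; [lra | exact: hCr].
- by rewrite /differP eq_sym.
Qed.

Lemma div_le1 x y : Rle 0 x -> Rle x 1 -> Rle 1 y -> Rle 0 (Rdiv x y) /\ Rle (Rdiv x y) 1.
Proof.
move=> h1 h2 h3.
have e : Rmult (Rdiv x y) y = x by field; apply: Rgt_not_eq; lra.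
set z := Rdiv x y in e *; split; nra.
Qed.


Definition Fred : Reduction al be ga :=
  @Build_Reduction P al be ga (fun _ => unit) (fun I _ => PI I)
    (fun I _ f w => code (f w.1) w.2) (fun I _ f c => c).

Lemma main_sec (D : R) : linear_reduction D Fred.
Proof.
exists (INR (NN + #|Ct|)), (Rinv (2 * INR (NN + #|Ct|))), 1%N.
have hN := NN_pos.
have hNC : Rlt 0 (INR (NN + #|Ct|)) by rewrite plus_INR; have := pos_INR #|Ct|; lra.
split; first by apply: Rinv_0_lt_compat; lra.
move=> I [w01 wsum _].
have hC := LP_Ct (Lell I).
have hCr : Rlt 0 (INR #|Ct|) by apply: lt_0_INR; apply/ltP.
have w0 : forall v : LV I, Rle 0 (Lw v) by move=> v; case: (w01 v).
have hV : (0 < #|LV I|)%N.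
  case: (posnP #|LV I|) => // h0; exfalso; move: wsum; rewrite sum_empty //; lra.
split.
- by rewrite card_unit.
- move=> s; split; first split.
  + case=> [w|c] /=.
    * case: (w01 w.1) => h1 h2; apply: div_le1 => //.
      have := @le_INR 1 NN; rewrite /= => h; have : Rle 1 (INR NN).
        by apply: h; apply/leP; apply/card_gt0P; exists [tuple of nseq d (@Ordinal 4 0 isT)].
      lra.
    * have := div_le1 (x := 1) (y := 2 * INR #|Ct|); rewrite /Rdiv Rmult_1_l; apply; try lra.
      have := @le_INR 1 #|Ct|; rewrite /= => h.
      have h' := h (elimT leP hC); lra.
  + rewrite big_sumType /= sumR_const.
    have -> : \big[Rplus/R0]_(i : Wt I) (Rdiv (Lw i.1) (2 * INR NN)) =
              \big[Rplus/R0]_(v : LV I) \big[Rplus/R0]_(l : Tup) (Rdiv (Lw v) (2 * INR NN)).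
      by rewrite pair_bigA.
    have -> : \big[Rplus/R0]_(v : LV I) \big[Rplus/R0]_(l : Tup) (Rdiv (Lw v) (2 * INR NN)) =
              \big[Rplus/R0]_(v : LV I) Rmult (Lw v) (/ 2).
      apply: eq_bigr => v _; rewrite sumR_const -/NN; field; apply: Rgt_not_eq; lra.
    rewrite sumR_mulr wsum.
    have hc0 : INR #|Ct| <> R0 by apply: not_0_INR; apply/eqP; rewrite -lt0n; exact: hC.
    change (Rplus (Rmult R1 (Rinv 2)) (Rmult (INR #|Ct|) (Rinv (Rmult 2 (INR #|Ct|)))) = R1).
    field; exact: hc0.
  + rewrite -mult_INR; apply: le_INR; apply/leP.
    change (#|Wt I| + #|Ct| <= Nat.mul (NN + #|Ct|) #|LV I|)%N.
    rewrite card_prod -/NN.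
    rewrite -[X in (_ <= X)%N]/(((NN + #|Ct|) * #|LV I|)%N) mulnDl [(NN * _)%N]mulnC leq_add2l.
    by rewrite leq_pmulr.
- move=> s f hf; exact: complete hf.
- move=> eps f he1 he2 far; exists setT; split.
    rewrite cardsT /= card_unit; simpl; lra.
  move=> s _ bX bY hs.
  have hc1 : Rle (Rinv (2 * INR (NN + #|Ct|))) (Rinv (2 * INR NN)).
    apply: Rinv_le_contravar; first lra.
    rewrite plus_INR; lra.
  have hc2 : Rle (Rinv (2 * INR (NN + #|Ct|))) (Rinv (2 * INR #|Ct|)).
    apply: Rinv_le_contravar; first lra.
    rewrite plus_INR; lra.
  case: (boolP [forall c, bY c == c]).
  + move/forallP => hY.
    have := sound_B w0 (fun c => eqP (hY c)) far hs.
    move=> h; apply: Rle_trans _ h.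
    rewrite /Rdiv Rmult_comm; apply: Rmult_le_compat_l => //; lra.
  + move=> hn; have [c hc] : exists c, bY c != c by apply/existsP; rewrite -negb_forall.
    have := sound_A f bX w0 hc.
    move=> h; apply: Rle_trans _ h; apply: Rle_trans hc2.
    have c1p : Rle 0 (Rinv (2 * INR (NN + #|Ct|))) by apply: Rlt_le; apply: Rinv_0_lt_compat; lra.
    rewrite -[X in Rle _ X]Rmult_1_r; apply: Rmult_le_compat_l => //; lra.
- move=> s; split.
  + move=> x; exists [set x.1]; split; first by rewrite cards1.
    by move=> f g h; rewrite /= h // inE.
  + move=> y; exists set0; split; first by rewrite cards0.
    by [].
Qed.

End Main.

Theorem mainTheorem15 (P : finType) (al be ga : rel P) :
  is_pentagon al be ga ->
  forall D : R, Rle R1 D ->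
  exists F : Reduction al be ga, linear_reduction D F.
Proof.
move=> Hp D _.
case: (code_exists Hp) => d hd0.
have hd : forall th : LP al be ga, exists x : {ffun d.-tuple 'I_4 -> Bt be},
    evU al ga (fun t => x t) == val th.
  by move=> th; case: (hd0 th) => x hx; exists x; apply/eqP.
exists (Fred (fun th => xchoose (hd th))).
apply: main_sec => //.
by move=> th; apply/eqP; apply: (xchooseP (hd th)).
Qed.
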